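(* Let $q:V\to\overline K/\overline R$ be a non-trivial generalized $(\sigma,\varepsilon)$-quadratic form with sesquilinearization $f$, and let $E=(e_i)_{i\in I}$ and $E'=(e'_i)_{i\in I}$ be two bases of $V$ consisting of $q$-singular vectors, indexed by the same totally ordered set $I$. Let $\overline R_{E,E'}$ be the smallest closed subgroup of $\overline K$ containing $\{\overline{g_{E'}(e_i,e_i)}\}_{i\in I}$ and define $\delta_{E,E'}:V\to\overline K$ by $\delta_{E,E'}(x)=\overline{g_E(x,x)}-\overline{g_{E'}(x,x)}$. Then $\overline R_{E,E'}$ is a vector subspace of $(\overline R,\circ)$, $\delta_{E,E'}$ is a surjective $K$-linear map from $V$ onto $\overline R_{E,E'}$ (indeed $\delta_{E,E'}(\sum_i e_i\lambda_i)=-\sum_i\overline{g_{E'}(e_i,e_i)}\circ\lambda_i$), $\delta_{E',E}=-\delta_{E,E'}$ and $\overline R_{E,E'}=\overline R_{E',E}$.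
   Context: $K$ division ring, $(\sigma,\varepsilon)$ admissible pair ($\sigma$ anti-automorphism, $\varepsilon^\sigma\varepsilon=1$, $t^{\sigma^2}=\varepsilon t\varepsilon^{-1}$). $K_{\sigma,\varepsilon}=\{t-t^\sigma\varepsilon\}$, $K^{\sigma,\varepsilon}=\{t:t=-t^\sigma\varepsilon\}$, $\overline K=K/K_{\sigma,\varepsilon}$, $\bar t$ class of $t$, $\bar t\circ\lambda=\overline{\lambda^\sigma t\lambda}$; $K^{\sigma,\varepsilon}/K_{\sigma,\varepsilon}$ is a right $K$-vector space under $\circ$. Closed subgroup: stable under all $\circ\lambda$. Generalized $(\sigma,\varepsilon)$-quadratic form with co-defect closed $\overline R$: $q:V\to\overline K/\overline R$ ($V$ right $K$-vector space) with $q(x\lambda)=q(x)\circ\lambda$ (where $(\bar t+\overline R)\circ\lambda=\bar t\circ\lambda+\overline R$) and trace-valued $(\sigma,\varepsilon)$-sesquilinear $f$ ($f(x\lambda,y\mu)=\lambda^\sigma f(x,y)\mu$, $f(y,x)=f(x,y)^\sigma\varepsilon$, $f(x,x)\in\{t+t^\sigma\varepsilon\}$) with $q(x+y)=q(x)+q(y)+(\overline{f(x,y)}+\overline R)$. For non-trivial $q$, $\overline R$ is a $K$-subspace of $K^{\sigma,\varepsilon}/K_{\sigma,\varepsilon}$. $x$ is $q$-singular if $q(x)=\overline R$. For a basis $E=(e_i)_{i\in I}$ of $q$-singular vectors with $I$ totally ordered, $g_E(\sum_i e_i\lambda_i,\sum_j e_j\mu_j)=\sum_{i<j}\lambda_i^\sigma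 f(e_i,e_j)\mu_j$; it satisfies $q(x)=\overline{g_E(x,x)}+\overline R$. *)

(* Defs.v *)
From HB Require Import structures.
From mathcomp Require Import all_boot all_order all_algebra.
From Stdlib Require Import ClassicalEpsilon.
Set Implicit Arguments. Unset Strict Implicit. Unset Printing Implicit Defensive.
Import Order.TTheory GRing.Theory.
Local Open Scope ring_scope.

Definition division_ring (K : unitRingType) : Prop :=
  forall x : K, x != 0 -> x \is a GRing.unit.

(* Right K-vector spaces are left modules over the converse ring K^c;
   x *r l denotes the right scalar multiple x.l *)
Definition rscale (K : unitRingType) (V : lmodType K^c) (x : V) (l : K) : V :=
  (l : K^c) *: x.
Notation "x *r l" := (rscale x l) (at level 40, left associativity).

Section Forms.
Variable K : unitRingType.
Variable sigma : K -> K.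
Variable eps : K.

Definition anti_automorphism : Prop :=
  bijective sigma /\
  (forall a b, sigma (a + b) = sigma a + sigma b) /\
  (forall a b, sigma (a * b) = sigma b * sigma a) /\
  sigma 1 = 1.

Definition admissible_pair : Prop :=
  anti_automorphism /\ sigma eps * eps = 1 /\
  (forall t, sigma (sigma t) = eps * t * eps^-1).

Definition Ksub (t : K) : Prop := exists u, t = u - sigma u * eps.
Definition Ksymm (t : K) : Prop := t = - (sigma t * eps).

(* Equality in Kbar = K / K_{sigma,eps} of the classes of t and u *)
Definition eqKbar (t u : K) : Prop := Ksub (t - u).

(* representative of  bar t o lambda *)
Definition circ (t l : K) : K := sigma l * t * l.

(* Subgroups of Kbar are represented by their preimages in K. *)
Definition closed_subgroup (R : K -> Prop) : Prop :=
  (forall t, Ksub t -> R t) /\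
  (forall a b, R a -> R b -> R (a - b)) /\
  (forall t l, R t -> R (circ t l)).

Definition closed_span (S : K -> Prop) (t : K) : Prop :=
  forall P, closed_subgroup P -> (forall u, S u -> P u) -> P t.

(* S (preimage of a subset of Kbar) is a vector subspace of (Rbar, o), where
   Rbar is a K-subspace of K^{sigma,eps}/K_{sigma,eps}:  S is a subgroup of
   K^{sigma,eps}/K_{sigma,eps} closed under o, contained in Rbar. *)
Definition subspace_of (R S : K -> Prop) : Prop :=
  closed_subgroup S /\ (forall t, S t -> Ksymm t) /\ (forall t, S t -> R t).

Variable V : lmodType K^c.

Definition trace_valued_sesquilinear (f : V -> V -> K) : Prop :=
  (forall x y z, f (x + y) z = f x z + f y z) /\
  (forall x y z, f x (y + z) = f x y + f x z) /\
  (forall x y l m, f (x *r l) (y *r m) = sigma l * f x y * m) /\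
  (forall x y, f y x = sigma (f x y) * eps) /\
  (forall x, exists t, f x x = t + sigma t * eps).

(* Rbar is represented by its
   preimage R in K, and q by a map qr : V -> K with q(x) = class of qr x. *)
Definition gen_quadratic_form (R : K -> Prop) (qr : V -> K) (f : V -> V -> K)
  : Prop :=
  closed_subgroup R /\
  trace_valued_sesquilinear f /\
  (forall x l, R (qr (x *r l) - circ (qr x) l)) /\
  (forall x y, R (qr (x + y) - qr x - qr y - f x y)).

(* q is non-trivial: Rbar <> Kbar (trivial forms are those with Rbar = Kbar,
   i.e. the null forms) *)
Definition nontrivial_codefect (R : K -> Prop) : Prop := exists t, ~ R t.

Definition q_singular (R : K -> Prop) (qr : V -> K) (x : V) : Prop := R (qr x).

Variable d : Order.disp_t.
Variable I : orderType d.

Definition is_basis (E : I -> V) : Prop :=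
  (forall x : V, exists (s : seq I) (c : I -> K),
      x = \sum_(i <- s) E i *r c i) /\
  (forall (s : seq I) (c : I -> K), uniq s ->
      \sum_(i <- s) E i *r c i = 0 -> forall i, i \in s -> c i = 0).

Definition gE_rel (f : V -> V -> K) (E : I -> V) (x y : V) (t : K) : Prop :=
  exists (s : seq I) (l m : I -> K),
    [/\ uniq s,
        x = \sum_(i <- s) E i *r l i,
        y = \sum_(j <- s) E j *r m j &
        t = \sum_(i <- s) \sum_(j <- s | (i < j)%O)
              sigma (l i) * f (E i) (E j) * m j].

Definition gE (f : V -> V -> K) (E : I -> V) (x y : V) : K :=
  epsilon (inhabits 0) (gE_rel f E x y).

Definition R_EE (f : V -> V -> K) (E E' : I -> V) : K -> Prop :=
  closed_span (fun u => exists i, u = gE f E' (E i) (E i)).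

Definition delta (f : V -> V -> K) (E E' : I -> V) (x : V) : K :=
  gE f E x x - gE f E' x x.

End Forms.

(* Main.v *)
Require Import Defs.
From HB Require Import structures.
From mathcomp Require Import all_boot all_order all_algebra.
From Stdlib Require Import ClassicalEpsilon.
Import Order.TTheory GRing.Theory.
Local Open Scope ring_scope.
Set Implicit Arguments. Unset Strict Implicit. Unset Printing Implicit Defensive.

Section Scal.
Variables (K : unitRingType) (V : lmodType K^c).
Lemma rscaleA (x : V) a b : (x *r a) *r b = x *r (a * b).
Proof. by rewrite /rscale scalerA. Qed.
Lemma rscaleDr (x y : V) a : (x + y) *r a = x *r a + y *r a.
Proof. by rewrite /rscale scalerDr. Qed.
Lemma rscaleDl (x : V) a b : x *r (a + b) = x *r a + x *r b.
Proof. by rewrite /rscale scalerDl. Qed.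
Lemma rscale1 (x : V) : x *r 1 = x.
Proof. by rewrite /rscale scale1r. Qed.
Lemma rscale0 (x : V) : x *r 0 = 0.
Proof. by rewrite /rscale scale0r. Qed.
Lemma rscaleN1 (x : V) : x *r (-1) = - x.
Proof. by rewrite /rscale scaleN1r. Qed.
Lemma rscale_sumr (s : seq nat) (F : nat -> V) a :
  (\sum_(i <- s) F i) *r a = \sum_(i <- s) (F i *r a).
Proof. by rewrite /rscale scaler_sumr. Qed.
End Scal.

Section Sig.
Variables (K : unitRingType) (sigma : K -> K) (eps : K).
Hypothesis HD : division_ring K.
Hypothesis HA : admissible_pair sigma eps.

Lemma sD a b : sigma (a + b) = sigma a + sigma b.
Proof. by case: HA => [[_ [H _]] _]. Qed.
Lemma sM a b : sigma (a * b) = sigma b * sigma a.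
Proof. by case: HA => [[_ [_ [H _]]] _]. Qed.
Lemma s1 : sigma 1 = 1.
Proof. by case: HA => [[_ [_ [_ H]]] _]. Qed.
Lemma s0 : sigma 0 = 0.
Proof.
have := sD 0 0; rewrite addr0 => H.
by apply: (@addrI _ (sigma 0)); rewrite -H addr0.
Qed.
Lemma sN a : sigma (- a) = - sigma a.
Proof.
apply/eqP; rewrite -addr_eq0 -sD addrC subrr; exact/eqP/s0.
Qed.
Lemma sB a b : sigma (a - b) = sigma a - sigma b.
Proof. by rewrite sD sN. Qed.
Lemma s_sum (T : Type) (s : seq T) (P : pred T) (F : T -> K) :
  sigma (\sum_(i <- s | P i) F i) = \sum_(i <- s | P i) sigma (F i).
Proof. exact: (big_morph sigma sD s0). Qed.
Lemma eps_unit : eps \is a GRing.unit.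
Proof.
apply: HD; apply/eqP => e0.
case: HA => _ [H _]; move: H; rewrite e0 mulr0 => /eqP.
by rewrite eq_sym oner_eq0.
Qed.
Lemma ssE t : sigma (sigma t) * eps = eps * t.
Proof.
case: HA => _ [_ ->]. by rewrite divrK // eps_unit.
Qed.
Lemma swap3 a F b : sigma (sigma a * F * b) * eps = sigma b * (sigma F * eps) * a.
Proof. by rewrite !sM -!mulrA ssE. Qed.

Lemma Ksub0 : Ksub sigma eps 0.
Proof. by exists 0; rewrite s0 mul0r subr0. Qed.
Lemma KsubD a b : Ksub sigma eps a -> Ksub sigma eps b -> Ksub sigma eps (a + b).
Proof.
move=> [u ->] [v ->]; exists (u + v).
by rewrite sD mulrDl opprD addrACA.
Qed.
Lemma KsubN a : Ksub sigma eps a -> Ksub sigma eps (- a).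
Proof.
move=> [u ->]; exists (- u).
by rewrite sN mulNr opprK opprB addrC.
Qed.
Lemma KsubB a b : Ksub sigma eps a -> Ksub sigma eps b -> Ksub sigma eps (a - b).
Proof. by move=> ha hb; apply: KsubD => //; apply: KsubN. Qed.
Lemma Ksub_tr t : Ksub sigma eps (t - sigma t * eps).
Proof. by exists t. Qed.
Lemma Ksub_sum (T : Type) (s : seq T) (P : pred T) (F : T -> K) :
  (forall i, P i -> Ksub sigma eps (F i)) -> Ksub sigma eps (\sum_(i <- s | P i) F i).
Proof.
move=> H; elim/big_ind: _ => //; [exact: Ksub0 | exact: KsubD].
Qed.
Lemma Ksub_circ t l : Ksub sigma eps t -> Ksub sigma eps (circ sigma t l).
Proof.
move=> [u ->]; exists (sigma l * u * l); rewrite /circ.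
rewrite mulrBr mulrBl; congr (_ - _).
by rewrite swap3 mulrA.
Qed.

Lemma eqK_refl a : eqKbar sigma eps a a.
Proof. by rewrite /eqKbar subrr; exact: Ksub0. Qed.
Lemma eqK_sym a b : eqKbar sigma eps a b -> eqKbar sigma eps b a.
Proof. by move=> h; rewrite /eqKbar -opprB; apply: KsubN. Qed.
Lemma eqK_trans a b c : eqKbar sigma eps a b -> eqKbar sigma eps b c ->
  eqKbar sigma eps a c.
Proof.
move=> h1 h2; have := KsubD h1 h2; rewrite /eqKbar.
by rewrite addrA subrK.
Qed.
Lemma eqK_sub a b : eqKbar sigma eps a b <-> Ksub sigma eps (a - b).
Proof. by []. Qed.

Lemma eqK_add a b c e : eqKbar sigma eps a b -> eqKbar sigma eps c e ->
  eqKbar sigma eps (a + c) (b + e).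
Proof. by move=> h1 h2; have := KsubD h1 h2; rewrite /eqKbar opprD addrACA. Qed.
Lemma eqK_opp a b : eqKbar sigma eps a b -> eqKbar sigma eps (- a) (- b).
Proof. by move=> h; rewrite /eqKbar -opprD; apply: KsubN. Qed.
Lemma eqK_circ a b l : eqKbar sigma eps a b ->
  eqKbar sigma eps (circ sigma a l) (circ sigma b l).
Proof.
move=> h; rewrite /eqKbar.
have -> : circ sigma a l - circ sigma b l = circ sigma (a - b) l.
  by rewrite /circ mulrBr mulrBl.
exact: Ksub_circ.
Qed.

Section CS.
Variable P : K -> Prop.
Hypothesis HP : closed_subgroup sigma eps P.
Lemma cs_K t : Ksub sigma eps t -> P t.
Proof. by case: HP => H _; apply: H. Qed.
Lemma cs_B a b : P a -> P b -> P (a - b).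
Proof. by case: HP => _ [H _]; apply: H. Qed.
Lemma cs_circ t l : P t -> P (circ sigma t l).
Proof. by case: HP => _ [_ H]; apply: H. Qed.
Lemma cs_0 : P 0.
Proof. apply: cs_K; exact: Ksub0. Qed.
Lemma cs_N a : P a -> P (- a).
Proof. by move=> h; rewrite -sub0r; apply: cs_B => //; apply: cs_0. Qed.
Lemma cs_D a b : P a -> P b -> P (a + b).
Proof. by move=> ha hb; rewrite -[b]opprK; apply: cs_B => //; apply: cs_N. Qed.
Lemma cs_sum (T : Type) (s : seq T) (Q : pred T) (F : T -> K) :
  (forall i, Q i -> P (F i)) -> P (\sum_(i <- s | Q i) F i).
Proof. move=> H; elim/big_ind: _ => //; [exact: cs_0 | exact: cs_D]. Qed.
Lemma cs_tr b a : P b -> eqKbar sigma eps a b -> P a.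
Proof.
move=> hb hab; have := cs_B hb (cs_K (KsubN hab)).
by rewrite opprB subKr.
Qed.
End CS.

Lemma span_closed S : closed_subgroup sigma eps (closed_span sigma eps S).
Proof.
split; [|split].
- by move=> t ht P HP _; apply: cs_K.
- by move=> a b ha hb P HP HS; apply: cs_B => //; [apply: ha | apply: hb].
- by move=> t l ht P HP HS; apply: cs_circ => //; apply: ht.
Qed.
Lemma span_gen (S : K -> Prop) u : S u -> closed_span sigma eps S u.
Proof. by move=> h P _ HS; apply: HS. Qed.
Lemma span_ind (S P : K -> Prop) t : closed_subgroup sigma eps P ->
  (forall u, S u -> P u) -> closed_span sigma eps S t -> P t.
Proof. by move=> HP HS h; apply: h. Qed.

Lemma reorg (M : zmodType) (a b c e : M) : (a + b) + (c + e) = (a + e) + (b + c).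
Proof. by rewrite (addrC c) addrACA. Qed.
Lemma zid2 (M : zmodType) (a b c e q : M) :
  (a + b + q) - (c + e + q) = (a - c) + (b - e).
Proof. by rewrite opprD addrACA subrr addr0 opprD addrACA. Qed.

Section Quad.
Variables (V : lmodType K^c) (R : K -> Prop) (qr : V -> K) (f : V -> V -> K).
Hypothesis HQ : gen_quadratic_form sigma eps R qr f.
Hypothesis HN : nontrivial_codefect R.

Lemma Rcl : closed_subgroup sigma eps R.
Proof. by case: HQ. Qed.
Lemma RK t : Ksub sigma eps t -> R t.
Proof. by case: Rcl => H _; apply: H. Qed.
Lemma RB a b : R a -> R b -> R (a - b).
Proof. by case: Rcl => _ [H _]; apply: H. Qed.
Lemma Rcirc t l : R t -> R (circ sigma t l).
Proof. by case: Rcl => _ [_ H]; apply: H. Qed.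
Lemma R0 : R 0.
Proof. apply: RK; exact: Ksub0. Qed.
Lemma RN a : R a -> R (- a).
Proof. by move=> h; rewrite -sub0r; apply: RB => //; apply: R0. Qed.
Lemma RD a b : R a -> R b -> R (a + b).
Proof. by move=> ha hb; rewrite -[b]opprK; apply: RB => //; apply: RN. Qed.
Lemma Rsc x l : R (qr (x *r l) - circ sigma (qr x) l).
Proof. by case: HQ => _ [_ [H _]]. Qed.
Lemma Radd x y : R (qr (x + y) - qr x - qr y - f x y).
Proof. by case: HQ => _ [_ [_ H]]. Qed.
Lemma Hf : trace_valued_sesquilinear sigma eps f.
Proof. by case: HQ => _ [H _]. Qed.
Lemma fDl x y z : f (x + y) z = f x z + f y z.
Proof. by case: Hf => H _. Qed.
Lemma fDr x y z : f x (y + z) = f x y + f x z.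
Proof. by case: Hf => _ [H _]. Qed.
Lemma fsc x y l m : f (x *r l) (y *r m) = sigma l * f x y * m.
Proof. by case: Hf => _ [_ [H _]]. Qed.
Lemma fsym x y : f y x = sigma (f x y) * eps.
Proof. by case: Hf => _ [_ [_ [H _]]]. Qed.

Lemma R_all c : (forall m, R (c * m)) -> c = 0.
Proof.
move=> H; case/boolP: (c == 0) => [/eqP //|nz]; exfalso.
case: HN => t; apply; have := H (c^-1 * t); rewrite mulVKr //; exact: HD.
Qed.

Lemma R_symm t : R t -> Ksymm sigma eps t.
Proof.
move=> Rt; rewrite /Ksymm; apply/eqP; rewrite -addr_eq0; apply/eqP.
apply: R_all => m.
have h1 : R (circ sigma t (1 + m) - circ sigma t 1 - circ sigma t m).
  by apply: RB; [apply: RB|]; apply: Rcirc.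
have h2 : R (sigma m * t - sigma (sigma m * t) * eps) by apply: RK; apply: Ksub_tr.
have e1 : circ sigma t (1 + m) - circ sigma t 1 - circ sigma t m = t * m + sigma m * t.
  rewrite /circ sD s1 !mul1r !mulr1 !mulrDl !mulrDr !mul1r !mulr1.
  by rewrite -[t + _ + _]addrA (addrC t) addrK addrA addrK.
have e2 : sigma (sigma m * t) * eps = sigma t * eps * m.
  by rewrite sM -!mulrA ssE.
have := RB h1 h2; rewrite e1 e2 mulrDl.
by rewrite opprB [_ - sigma m * t]addrC addrA addrK.
Qed.
Lemma Rq_sc e l : R (qr e) -> R (qr (e *r l)).
Proof. move=> Re; have := RD (Rsc e l) (Rcirc l Re); by rewrite subrK. Qed.

Lemma f_sing e : R (qr e) -> f e e = 0.
Proof.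
move=> Re; apply: R_all => m.
have := Radd e (e *r m).
rewrite -{1}[e]rscale1 -rscaleDl.
have f1 : f e (e *r m) = f e e * m by rewrite -{1}[e]rscale1 fsc s1 mul1r.
rewrite f1 => h.
have := RB (RB (RB (Rq_sc (1+m) Re) Re) (Rq_sc m Re)) h.
by rewrite subKr.
Qed.

Definition Req a b := R (a - b).
Lemma Req_refl a : Req a a.
Proof. by rewrite /Req subrr; apply: R0. Qed.
Lemma Req_sym a b : Req a b -> Req b a.
Proof. by move=> h; rewrite /Req -opprB; apply: RN. Qed.
Lemma Req_trans a b c : Req a b -> Req b c -> Req a c.
Proof. by move=> h1 h2; have := RD h1 h2; rewrite /Req addrA subrK. Qed.
Lemma Req_add a b c e : Req a b -> Req c e -> Req (a + c) (b + e).
Proof. by move=> h1 h2; have := RD h1 h2; rewrite /Req opprD addrACA. Qed.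
Lemma Req_K a b : eqKbar sigma eps a b -> Req a b.
Proof. exact: RK. Qed.

Variables (d : Order.disp_t) (I : orderType d).

Lemma restrict (M : zmodType) (s S : seq I) (P : pred I) (F : I -> M) :
  uniq s -> uniq S -> {subset s <= S} ->
  \sum_(i <- S | P i) (if i \in s then F i else 0) = \sum_(i <- s | P i) F i.
Proof.
move=> us uS sub; rewrite -big_mkcondr.
rewrite (eq_bigl (fun i => (i \in s) && P i)); last by move=> i; rewrite andbC.
rewrite -big_filter_cond; apply: perm_big.
apply: uniq_perm => //; first exact: filter_uniq.
move=> x; rewrite mem_filter; case: (boolP (x \in s)) => //= /sub ->.
by [].
Qed.

Lemma split1 (M : zmodType) (s : seq I) p (F : I -> M) : uniq s -> p \in s ->
  \sum_(q <- s) F q = \sum_(q <- s | (p < q)%O) F q + F p + \sum_(q <- s | (q < p)%O) F q.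
Proof.
move=> us ps; rewrite (bigD1_seq p) //= (bigID (fun q => (p < q)%O)) /=.
have e1 : \sum_(q <- s | (q != p) && (p < q)%O) F q = \sum_(q <- s | (p < q)%O) F q.
  by apply: eq_bigl => q; case: ltgtP.
have e2 : \sum_(q <- s | (q != p) && ~~ (p < q)%O) F q = \sum_(q <- s | (q < p)%O) F q.
  by apply: eq_bigl => q; case: ltgtP.
by rewrite e1 e2 addrA (addrC (F p)).
Qed.

Lemma split2 (M : zmodType) (s : seq I) (F : I -> I -> M) : uniq s ->
  \sum_(p <- s) \sum_(q <- s) F p q =
  \sum_(p <- s) \sum_(q <- s | (p < q)%O) F p q + \sum_(p <- s) F p p
  + \sum_(p <- s) \sum_(q <- s | (q < p)%O) F p q.
Proof.
move=> us; rewrite -!big_split /=; apply: eq_big_seq => p ps.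
exact: split1.
Qed.

Lemma exch (M : zmodType) (s : seq I) (F : I -> I -> M) :
  \sum_(p <- s) \sum_(q <- s | (q < p)%O) F p q =
  \sum_(q <- s) \sum_(p <- s | (q < p)%O) F p q.
Proof. by rewrite (exchange_big_dep predT). Qed.

Section Expand.
Variables (h : V -> V -> K) (C : I -> V).
Hypothesis hDl : forall x y z, h (x + y) z = h x z + h y z.
Hypothesis hDr : forall x y z, h x (y + z) = h x y + h x z.
Hypothesis hsc : forall x y l m, h (x *r l) (y *r m) = sigma l * h x y * m.

Lemma h0l y : h 0 y = 0.
Proof.
have e := hDl 0 0 y; rewrite addr0 in e.
by apply: (@addrI _ (h 0 y)); rewrite addr0 -e.
Qed.
Lemma h0r y : h y 0 = 0.
Proof.
have e := hDr y 0 0; rewrite addr0 in e.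
by apply: (@addrI _ (h y 0)); rewrite addr0 -e.
Qed.
Lemma expand1 x l (t : seq I) m : h (x *r l) (\sum_(j <- t) C j *r m j) =
  \sum_(j <- t) sigma l * h x (C j) * m j.
Proof.
elim: t => [|a t IH]; first by rewrite !big_nil h0r.
by rewrite !big_cons hDr IH hsc.
Qed.
Lemma expand (s : seq I) l (t : seq I) m :
  h (\sum_(i <- s) C i *r l i) (\sum_(j <- t) C j *r m j) =
  \sum_(i <- s) \sum_(j <- t) sigma (l i) * h (C i) (C j) * m j.
Proof.
elim: s => [|a s IH]; first by rewrite !big_nil h0l.
by rewrite !big_cons hDl IH expand1.
Qed.
End Expand.

Section Basis.
Variable B : I -> V.
Hypothesis HB : is_basis B.

Definition Sv (s : seq I) (l : I -> K) : V := \sum_(i <- s) B i *r l i.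
Definition G (s : seq I) (l m : I -> K) : K :=
  \sum_(i <- s) \sum_(j <- s | (i < j)%O) sigma (l i) * f (B i) (B j) * m j.
Definition ext (s : seq I) (l : I -> K) i := if i \in s then l i else 0.

Lemma Sv_ext s S l : uniq s -> uniq S -> {subset s <= S} -> Sv S (ext s l) = Sv s l.
Proof.
move=> us uS sub; rewrite /Sv -(restrict predT _ us uS sub).
by apply: eq_bigr => i _; rewrite /ext; case: ifP => _ //; rewrite rscale0.
Qed.

Lemma rscaleB (x : V) a b : x *r (a - b) = x *r a - x *r b.
Proof. by rewrite /rscale scalerBl. Qed.

Lemma coef_uniq s s' l l' : uniq s -> uniq s' -> Sv s l = Sv s' l' ->
  forall i, ext s l i = ext s' l' i.
Proof.
move=> us us' e i.
set S := undup (s ++ s').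
have uS : uniq S by apply: undup_uniq.
have sub1 : {subset s <= S} by move=> j hj; rewrite mem_undup mem_cat hj.
have sub2 : {subset s' <= S} by move=> j hj; rewrite mem_undup mem_cat hj orbT.
have h : \sum_(j <- S) B j *r (ext s l j - ext s' l' j) = 0.
  under eq_bigr do rewrite rscaleB.
  rewrite sumrB.
  have := Sv_ext l us uS sub1; have := Sv_ext l' us' uS sub2.
  rewrite /Sv => -> ->; rewrite -/(Sv s l) -/(Sv s' l') e; exact: subrr.
case/boolP: (i \in S) => iS.
  by apply/eqP; rewrite -subr_eq0; apply/eqP; case: HB => _ H; exact: (H S (fun j => ext s l j - ext s' l' j) uS h i iS).
rewrite /ext; have -> : (i \in s) = false.
  by apply/negbTE; apply: contra iS; apply: sub1.
have -> // : (i \in s') = false.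
by apply/negbTE; apply: contra iS; apply: sub2.
Qed.

Lemma G_eq s l l' m m' : l =1 l' -> m =1 m' -> G s l m = G s l' m'.
Proof.
by move=> hl hm; rewrite /G; apply: eq_bigr => i _; apply: eq_bigr => j _; rewrite hl hm.
Qed.

Lemma G_ext s S l m : uniq s -> uniq S -> {subset s <= S} ->
  G S (ext s l) (ext s m) = G s l m.
Proof.
move=> us uS sub; rewrite /G -(restrict predT _ us uS sub).
apply: eq_bigr => i _; rewrite /ext; case: (boolP (i \in s)) => his.
  rewrite -(restrict _ _ us uS sub); apply: eq_bigr => j _.
  by case: ifP => _ //; rewrite mulr0.
by apply: big1 => j _; rewrite s0 !mul0r.
Qed.

Lemma G_uniq x y t t' : gE_rel sigma f B x y t -> gE_rel sigma f B x y t' -> t = t'.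
Proof.
move=> [s [l [m [us -> -> ->]]]] [s' [l' [m' [us' ex ey ->]]]].
set S := undup (s ++ s').
have uS : uniq S by apply: undup_uniq.
have sub1 : {subset s <= S} by move=> j hj; rewrite mem_undup mem_cat hj.
have sub2 : {subset s' <= S} by move=> j hj; rewrite mem_undup mem_cat hj orbT.
rewrite -/(G s l m) -/(G s' l' m').
rewrite -(G_ext l m us uS sub1) -(G_ext l' m' us' uS sub2).
by apply: G_eq => i; apply: coef_uniq.
Qed.

Lemma gE_G s l m : uniq s -> gE sigma f B (Sv s l) (Sv s m) = G s l m.
Proof.
move=> us.
have ex : gE_rel sigma f B (Sv s l) (Sv s m) (G s l m) by exists s, l, m.
have := epsilon_spec (inhabits 0) _ (ex_intro _ _ ex) => h.
exact: G_uniq h ex.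
Qed.

Lemma rep_uniq x : exists s l, uniq s /\ x = Sv s l.
Proof.
case: HB => H _; case: (H x) => s [c ->]; rewrite /Sv.
elim: s => [|a s [s' [c' [us' e]]]].
  by exists [::], c; rewrite !big_nil.
rewrite big_cons e; case/boolP: (a \in s') => ha.
  exists s', (fun i => if i == a then c' a + c a else c' i); split => //.
  rewrite !(bigD1_seq a ha us') /= eqxx rscaleDl addrA (addrC (B a *r c a)).
  by congr (_ + _); apply: eq_bigr => i /negbTE ->.
exists (a :: s'), (fun i => if i == a then c a else c' i); split.
  by rewrite /= ha us'.
rewrite big_cons eqxx; congr (_ + _); apply: eq_big_seq => i hi.
have : i != a by apply: contraNneq ha => <-.
by move/negbTE ->.
Qed.

Lemma rep3 x y z : exists s a b c,
  [/\ uniq s, x = Sv s a, y = Sv s b & z = Sv s c].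
Proof.
case: (rep_uniq x) => s1 [a [u1 ->]].
case: (rep_uniq y) => s2 [b [u2 ->]].
case: (rep_uniq z) => s3 [c [u3 ->]].
set S := undup (s1 ++ s2 ++ s3).
have uS : uniq S by apply: undup_uniq.
exists S, (ext s1 a), (ext s2 b), (ext s3 c); split => //; symmetry; apply: Sv_ext => //.
- by move=> j hj; rewrite mem_undup !mem_cat hj.
- by move=> j hj; rewrite mem_undup !mem_cat hj orbT.
- by move=> j hj; rewrite mem_undup !mem_cat hj !orbT.
Qed.

Lemma Sv_add s a b : Sv s a + Sv s b = Sv s (fun i => a i + b i).
Proof. by rewrite /Sv -big_split; apply: eq_bigr => i _; rewrite rscaleDl. Qed.

Lemma Sv_sc s a l : Sv s a *r l = Sv s (fun i => a i * l).
Proof.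
by rewrite /Sv /rscale scaler_sumr; apply: eq_bigr => i _; rewrite -/(rscale _ _) rscaleA.
Qed.

Notation g := (gE sigma f B).

Lemma g_addl x y z : g (x + y) z = g x z + g y z.
Proof.
case: (rep3 x y z) => s [a [b [c [us -> -> ->]]]].
rewrite Sv_add !gE_G // /G -big_split; apply: eq_bigr => i _.
by rewrite -big_split; apply: eq_bigr => j _; rewrite sD !mulrDl.
Qed.

Lemma g_addr x y z : g x (y + z) = g x y + g x z.
Proof.
case: (rep3 x y z) => s [a [b [c [us -> -> ->]]]].
rewrite Sv_add !gE_G // /G -big_split; apply: eq_bigr => i _.
by rewrite -big_split; apply: eq_bigr => j _; rewrite mulrDr.
Qed.

Lemma g_sc x y l m : g (x *r l) (y *r m) = sigma l * g x y * m.
Proof.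
case: (rep3 x y 0) => s [a [b [c [us -> -> _]]]].
rewrite !Sv_sc !gE_G // /G mulr_sumr mulr_suml; apply: eq_bigr => i _.
rewrite mulr_sumr mulr_suml; apply: eq_bigr => j _.
by rewrite sM !mulrA.
Qed.

Lemma g_diag a : g (B a) (B a) = 0.
Proof.
have -> : B a = Sv [:: a] (fun _ => 1) by rewrite /Sv big_seq1 rscale1.
by rewrite gE_G // /G !big_cons !big_nil /= ltxx !addr0.
Qed.

Lemma g0l y : g 0 y = 0.
Proof.
have h := g_addl 0 0 y; rewrite addr0 in h.
by apply: (@addrI _ (g 0 y)); rewrite addr0 -h.
Qed.
Lemma FG (fdiag : forall p, f (B p) (B p) = 0) x y :
  f x y = g x y + sigma (g y x) * eps.
Proof.
case: (rep3 x y 0) => s [a [b [c [us -> -> _]]]].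
rewrite !gE_G // /Sv (expand B fDl fDr fsc) (split2 _ us).
have -> : \sum_(p <- s) sigma (a p) * f (B p) (B p) * b p = 0.
  by apply: big1 => p _; rewrite fdiag mulr0 mul0r.
rewrite addr0; congr (_ + _).
rewrite exch /G s_sum mulr_suml; apply: eq_bigr => q _.
rewrite s_sum mulr_suml; apply: eq_bigr => p _.
by rewrite swap3 -fsym.
Qed.

Lemma QG (sing : forall p, R (qr (B p))) x : Req (qr x) (g x x).
Proof.
have fd : forall p, f (B p) (B p) = 0 by move=> p; apply: f_sing.
case: HB => H _; case: (H x) => s [c ->].
elim: s => [|a s IH].
  rewrite big_nil g0l /Req subr0.
  by have := Rsc 0 0; rewrite rscale0 /circ !mulr0 subr0.
rewrite big_cons; set z := B a *r c a; set y := \sum_(i <- s) _.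
have gzz : g z z = 0 by rewrite /z g_sc g_diag mulr0 mul0r.
rewrite g_addl !g_addr gzz add0r.
apply: (@Req_trans _ (qr z + qr y + f z y)).
  by rewrite /Req !opprD !addrA; apply: Radd.
rewrite (FG fd z y).
have h1 : Req (qr z) 0 by rewrite /Req subr0; apply: Rq_sc; apply: sing.
have h2 : Req (sigma (g y z) * eps) (g y z).
  apply: Req_K; apply: eqK_sym; exact: Ksub_tr.
have := Req_add (Req_add h1 IH) (Req_add (Req_refl (g z y)) h2).
rewrite add0r => h; apply: Req_trans h _.
by rewrite addrC -addrA; apply: Req_refl.
Qed.
End Basis.
Section Main.
Variables E E' : I -> V.
Hypotheses (HE : is_basis E) (HE' : is_basis E').
Hypotheses (sE : forall i, R (qr (E i))) (sE' : forall i, R (qr (E' i))).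

Notation g := (gE sigma f E).
Notation h := (gE sigma f E').
Notation dl := (delta sigma f E E').

Lemma fdE p : f (E p) (E p) = 0. Proof. exact: f_sing. Qed.
Lemma fdE' p : f (E' p) (E' p) = 0. Proof. exact: f_sing. Qed.

Lemma delta_add x y : eqKbar sigma eps (dl (x + y)) (dl x + dl y).
Proof.
rewrite /delta !(g_addl HE) !(g_addr HE) !(g_addl HE') !(g_addr HE').
rewrite (reorg (g x x)) (reorg (h x x)).
have PQ : eqKbar sigma eps (g x y + g y x) (h x y + h y x).
  apply: (@eqK_trans _ (g x y + sigma (g y x) * eps)).
    by apply: eqK_add; [apply: eqK_refl | apply: Ksub_tr].
  rewrite -(FG HE fdE) (FG HE' fdE').
  by apply: eqK_add; [apply: eqK_refl | apply: eqK_sym; apply: Ksub_tr].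
apply: (@eqK_trans _ (g x x + g y y + (h x y + h y x) - (h x x + h y y + (h x y + h y x)))).
  by apply: eqK_add; [apply: eqK_add; [apply: eqK_refl | exact: PQ] | apply: eqK_refl].
rewrite zid2; exact: eqK_refl.
Qed.

Lemma delta_sc x l : dl (x *r l) = circ sigma (dl x) l.
Proof. by rewrite /delta (g_sc HE) (g_sc HE') /circ mulrBr mulrBl. Qed.

Lemma delta_formula (s : seq I) (l : I -> K) : uniq s ->
  eqKbar sigma eps (dl (\sum_(i <- s) E i *r l i))
    (- \sum_(i <- s) circ sigma (h (E i) (E i)) (l i)).
Proof.
move=> us; rewrite /delta.
have e1 := gE_G HE l l us; rewrite /Sv in e1; rewrite e1.
rewrite (expand E (g_addl HE') (g_addr HE') (g_sc HE')) (split2 _ us).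
have eG : G E s l l =
   \sum_(p <- s) \sum_(q <- s | (p < q)%O) sigma (l p) * h (E p) (E q) * l q
 + \sum_(p <- s) \sum_(q <- s | (q < p)%O) sigma (sigma (l p) * h (E p) (E q) * l q) * eps.
  rewrite (exch s (fun p q => sigma (sigma (l p) * h (E p) (E q) * l q) * eps)).
  rewrite /G -big_split; apply: eq_bigr => i _.
  rewrite -big_split; apply: eq_bigr => j _.
  by rewrite (FG HE' fdE') mulrDr mulrDl swap3.
have eC : eqKbar sigma eps
   (\sum_(p <- s) \sum_(q <- s | (q < p)%O) sigma (sigma (l p) * h (E p) (E q) * l q) * eps)
   (\sum_(p <- s) \sum_(q <- s | (q < p)%O) sigma (l p) * h (E p) (E q) * l q).
  rewrite /eqKbar -sumrB; apply: Ksub_sum => p _.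
  rewrite -sumrB; apply: Ksub_sum => q _.
  by rewrite -opprB; apply: KsubN; apply: Ksub_tr.
rewrite eG.
set A := \sum_(p <- s) \sum_(q <- s | (p < q)%O) _.
set C := \sum_(p <- s) \sum_(q <- s | (q < p)%O) sigma (l p) * _ * _.
set D := \sum_(p <- s) sigma (l p) * h (E p) (E p) * l p.
apply: (@eqK_trans _ (A + C - (A + D + C))).
  by apply: eqK_add; [apply: eqK_add; [apply: eqK_refl | exact: eC] | apply: eqK_refl].
rewrite (addrAC A D C) opprD addrA subrr add0r; exact: eqK_refl.
Qed.

Lemma delta_in x : R_EE sigma eps f E E' (dl x).
Proof.
case: (rep_uniq HE x) => s [l [us ->]]; rewrite /Sv.
apply: (cs_tr (span_closed _) _ (delta_formula l us)).
apply: (cs_N (span_closed _)); apply: (cs_sum (span_closed _)) => i _.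
apply: (cs_circ (span_closed _)); apply: span_gen; by exists i.
Qed.

Lemma R_EE_R t : R_EE sigma eps f E E' t -> R t.
Proof.
apply: span_ind; first exact: Rcl.
move=> u [i ->]; have := RB (sE i) (QG HE' sE' (E i)).
by rewrite subKr.
Qed.

Lemma swap_sub t : R_EE sigma eps f E' E t -> R_EE sigma eps f E E' t.
Proof.
apply: span_ind; first exact: span_closed.
move=> u [i ->]; have := delta_in (E' i).
by rewrite /delta (g_diag HE') subr0.
Qed.

Lemma delta0 : dl 0 = 0.
Proof. by rewrite /delta (g0l HE) (g0l HE') subrr. Qed.

Lemma delta_surj t : R_EE sigma eps f E E' t -> exists x, eqKbar sigma eps (dl x) t.
Proof.
move=> ht; apply: (@span_ind _ (fun t => exists x, eqKbar sigma eps (dl x) t) t _ _ ht).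
- split; [|split].
  + move=> u hu; exists 0; rewrite delta0 /eqKbar sub0r; exact: KsubN.
  + move=> a b [x hx] [y hy]; exists (x + - y).
    apply: (eqK_trans (delta_add x (- y))).
    have hn : eqKbar sigma eps (dl (- y)) (- dl y).
      have e0 := delta_add y (- y); rewrite subrr delta0 in e0.
      have := eqK_add (eqK_sym e0) (eqK_refl (- dl y)).
      by rewrite add0r [dl y + _]addrC addrK.
    exact: (eqK_add hx (eqK_trans hn (eqK_opp hy))).
  + move=> a l [x hx]; exists (x *r l); rewrite delta_sc; exact: eqK_circ.
- move=> u [i ->]; exists (- E i).
  have e0 := delta_add (E i) (- E i); rewrite subrr delta0 in e0.
  have := eqK_add (eqK_sym e0) (eqK_refl (- dl (E i))).
  rewrite add0r [dl (E i) + _]addrC addrK => hn.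
  apply: (eqK_trans hn); rewrite /delta (g_diag HE) sub0r opprK; exact: eqK_refl.
Qed.
End Main.
End Quad.
End Sig.

Theorem mainTheorem11
  (K : unitRingType) (sigma : K -> K) (eps : K)
  (V : lmodType K^c) (R : K -> Prop) (qr : V -> K) (f : V -> V -> K)
  (d : Order.disp_t) (I : orderType d) (E E' : I -> V) :
  division_ring K ->
  admissible_pair sigma eps ->
  gen_quadratic_form sigma eps R qr f ->
  nontrivial_codefect R ->
  is_basis E -> is_basis E' ->
  (forall i, q_singular R qr (E i)) ->
  (forall i, q_singular R qr (E' i)) ->
  subspace_of sigma eps R (R_EE sigma eps f E E') /\
      (forall x y, eqKbar sigma eps (delta sigma f E E' (x + y))
                     (delta sigma f E E' x + delta sigma f E E' y)) /\
      (forall x l, eqKbar sigma eps (delta sigma f E E' (x *r l))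
                     (circ sigma (delta sigma f E E' x) l)) /\
      ((forall x, R_EE sigma eps f E E' (delta sigma f E E' x)) /\
      (forall t, R_EE sigma eps f E E' t ->
         exists x, eqKbar sigma eps (delta sigma f E E' x) t)) /\
      (forall (s : seq I) (l : I -> K), uniq s ->
         eqKbar sigma eps (delta sigma f E E' (\sum_(i <- s) E i *r l i))
           (- \sum_(i <- s) circ sigma (gE sigma f E' (E i) (E i)) (l i))) /\
      (forall x, eqKbar sigma eps (delta sigma f E' E x)
                   (- delta sigma f E E' x)) /\
      (forall t, R_EE sigma eps f E E' t <-> R_EE sigma eps f E' E t).
Proof.
move=> HD HA HQ HN HE HE' sE sE'.
rewrite /q_singular in sE sE'.
split.
  split; first exact: span_closed.
  split=> t ht.
    exact: (R_symm HD HA HQ HN (R_EE_R HD HA HQ HN HE' sE sE' ht)).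
  exact: (R_EE_R HD HA HQ HN HE' sE sE' ht).
split; first by move=> x y; apply: (delta_add HD HA HQ HN HE HE' sE sE').
split; first by move=> x l; rewrite (delta_sc HA f HE HE'); apply: eqK_refl.
split; first split.
- exact: (delta_in HD HA HQ HN HE HE' sE').
- move=> t; exact: (delta_surj HD HA HQ HN HE HE' sE sE').
split; first by move=> s l us; apply: (delta_formula HD HA HQ HN HE HE' sE').
split.
  by move=> x; rewrite /delta opprB; apply: eqK_refl.
move=> t; split.
  exact: (swap_sub HD HA HQ HN HE' HE sE).
exact: (swap_sub HD HA HQ HN HE HE' sE').
Qed.
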